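(* Let $\mathcal{T}, \eta > 0 $, $\boldsymbol{v} \in C^1([0,\mathcal{T});\overline{\Omega})$ and let \[ u\in C([0,\mathcal{T});C^2(\overline{\Omega}))\cap C^1([0,\mathcal{T});C(\overline{\Omega})) \] denote a strictly positive classical solution of the non-linear Fokker--Planck equation \begin{equation*} \begin{cases} \begin{alignedat}{3} \partial_t&u && = \partial_x (u(\eta\partial_x\log(u)+ \partial_xf'(u)+ \boldsymbol{v})), &&\text{ in } (0,\mathcal{T}) \times \Omega,\\ &u_0 && = u &&\text{ on } \{0\}\times \overline{\Omega},\\ &0 && = u (\eta\partial_x\log(u) + \partial_xf'(u) + \boldsymbol{v}) &&\text{ on } (0,\mathcal{T})\times \partial\Omega. \end{alignedat} \end{cases} \end{equation*} Then, there exists $K_1 \coloneqq K_1(\boldsymbol{v}) > 0$, whose size depends only on $\|\boldsymbol{v}\|_{L^\infty([0,\mathcal{T})\times\Omega)}$ such that, for each $p \in \mathbb{R} \setminus \{0,1\}$, the following energy dissipation inequality is satisfied on $(0,\mathcal{T})$. \begin{equation*} \frac{1}{p(p-1)}\partial_t \int_{\Omega}u^p dx + \frac{1}{2}\int_{\Omega} \left(\eta+ 2 uf''(u)\right)u^{p-2}|\partial_x u|^2 dx \leqslant \frac{C_1}{\eta}\int_{\Omega}u^p dx. \end{equation*} Furthermore, there exist $K_2,K_3,K_4,K_5 > 0$, whose sizes depend only on $K_1,|\Omega|$ and $\eta$, such that, when $|p| > K_5$, the following energy dissipation inequality is satisfied on $(0,\mathcal{T})$ \begin{equation*} \partial_t\int_{\Omega}u^p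 dx+ K_2\int_{\Omega}u^p dx\leqslant K_3|p|^{K_4}\left(\int_{\Omega}u^\frac{p}{2}\right)^2. \end{equation*}
   Context: $\Omega=(0,L)$ is a bounded open interval; $f\in C^{4,\beta}_{loc}(0,+\infty)$ for some $\beta\in(0,1]$ with $f''\ge 0$ on $(0,+\infty)$. The constant $C_1$ appearing in the first inequality is the constant $K_1$ (in the proof $K_1=\frac12\|\boldsymbol{v}\|^2_{L^\infty}$). *)

(* Defs.v *)
From Stdlib Require Import Reals.
From Coquelicot Require Import Coquelicot.
Open Scope R_scope.

Definition cont_on2 (S : R -> R -> Prop) (g : R -> R -> R) : Prop :=
  forall t x, S t x -> forall eps, 0 < eps -> exists delta, 0 < delta /\
    forall s y, S s y -> Rabs (s - t) < delta -> Rabs (y - x) < delta ->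
      Rabs (g s y - g t x) < eps.

(* The closed space-time domain [0,T) x [0,L] (Omega = (0,L)). *)
Definition dom (L T : R) (t x : R) : Prop := 0 <= t < T /\ 0 <= x <= L.

Definition C4beta_loc (f : R -> R) (beta : R) : Prop :=
  (forall k : nat, (k < 4)%nat -> forall x, 0 < x -> ex_derive (Derive_n f k) x) /\
  (forall a b, 0 < a -> a <= b -> exists C, 0 <= C /\
     forall x y, a <= x -> x < y -> y <= b ->
       Rabs (Derive_n f 4 x - Derive_n f 4 y) <= C * Rpower (y - x) beta).

(* v in C^1([0,T) x [0,L]) (partial derivatives in the interior, extending
   continuously up to the closed domain). *)
Definition C1_field (L T : R) (v : R -> R -> R) : Prop :=
  exists vt vx : R -> R -> R,
    (forall t x, 0 < t < T -> 0 <= x <= L -> is_derive (fun s => v s x) t (vt t x)) /\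
    (forall t x, 0 <= t < T -> 0 < x < L -> is_derive (v t) x (vx t x)) /\
    cont_on2 (dom L T) v /\ cont_on2 (dom L T) vt /\ cont_on2 (dom L T) vx.

(* u in C([0,T);C^2([0,L])) cap C^1([0,T);C([0,L])), stated via joint
   continuity of u, d_t u, d_x u, d_xx u on the compact-in-space domain. *)
Definition regular_u (L T : R) (u : R -> R -> R) : Prop :=
  exists ut ux uxx : R -> R -> R,
    (forall t x, 0 < t < T -> 0 <= x <= L -> is_derive (fun s => u s x) t (ut t x)) /\
    (forall t x, 0 <= t < T -> 0 < x < L ->
        is_derive (u t) x (ux t x) /\ is_derive (ux t) x (uxx t x)) /\
    cont_on2 (dom L T) u /\ cont_on2 (dom L T) ut /\
    cont_on2 (dom L T) ux /\ cont_on2 (dom L T) uxx.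

Definition flux (eta : R) (f : R -> R) (v u : R -> R -> R) (t x : R) : R :=
  u t x * (eta * Derive (fun y => ln (u t y)) x
           + Derive (fun y => Derive f (u t y)) x + v t x).

Definition classical_solution (L T eta : R) (f : R -> R) (v u : R -> R -> R) : Prop :=
  regular_u L T u /\
  (forall t x, dom L T t x -> 0 < u t x) /\
  (forall t x, 0 < t < T -> 0 < x < L ->
     Derive (fun s => u s x) t = Derive (fun y => flux eta f v u t y) x) /\
  (forall t, 0 < t < T ->
     filterlim (flux eta f v u t) (at_right 0) (locally 0) /\
     filterlim (flux eta f v u t) (at_left L) (locally 0)).

Definition Lp_mass (L : R) (u : R -> R -> R) (p t : R) : R :=
  RInt (fun x => Rpower (u t x) p) 0 L.

(* Main.v *)
Require Import Defs.
From Stdlib Require Import Reals Lra Psatz.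
From Coquelicot Require Import Coquelicot.
Open Scope R_scope.

Lemma Rpower_pos x y : 0 < Rpower x y.
Proof. unfold Rpower; apply exp_pos. Qed.

Lemma cont_eps f x0 : continuity_pt f x0 -> forall eps, 0 < eps ->
  exists d, 0 < d /\ forall x, Rabs (x - x0) < d -> Rabs (f x - f x0) < eps.
Proof.
  intros H eps He. destruct (H eps He) as [d [Hd Hx]]. exists d; split; auto.
  intros x Hx'. destruct (Req_dec x x0) as [->|Hne].
  - rewrite Rminus_diag, Rabs_R0; auto.
  - apply (Hx x). split; [split; [exact I| auto]| exact Hx'].
Qed.

Lemma eps_cont f x0 : (forall eps, 0 < eps ->
  exists d, 0 < d /\ forall x, Rabs (x - x0) < d -> Rabs (f x - f x0) < eps) ->
  continuity_pt f x0.
Proof.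
  intros H eps He. destruct (H eps He) as [d [Hd Hx]]. exists d; split; auto.
  intros x [_ Hx']. apply Hx; exact Hx'.
Qed.

Lemma cpt_continuous f x : continuity_pt f x -> continuous f x.
Proof. intro H. apply continuity_pt_filterlim; exact H. Qed.

Lemma continuous_cpt f x : continuous f x -> continuity_pt f x.
Proof. intro H. apply continuity_pt_filterlim; exact H. Qed.

Lemma exR h a b : (forall x, continuity_pt h x) -> ex_RInt h a b.
Proof. intro H. apply (ex_RInt_continuous (V:=R_CompleteNormedModule)). intros; apply cpt_continuous; auto. Qed.

Lemma exR' g h a b : (forall x, continuity_pt h x) ->
  (forall x, Rmin a b < x < Rmax a b -> h x = g x) -> ex_RInt g a b.
Proof. intros H E. apply (ex_RInt_ext (V:=R_CompleteNormedModule) h); auto. apply exR; auto. Qed.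

Lemma RInt_plus' f g a b : ex_RInt f a b -> ex_RInt g a b ->
  RInt (fun x => f x + g x) a b = RInt f a b + RInt g a b.
Proof. intros. exact (RInt_plus f g a b H H0). Qed.

Lemma RInt_scal' f a b c : ex_RInt f a b ->
  RInt (fun x => c * f x) a b = c * RInt f a b.
Proof. intros. exact (RInt_scal f a b c H). Qed.

Lemma RInt_minus' f g a b : ex_RInt f a b -> ex_RInt g a b ->
  RInt (fun x => f x - g x) a b = RInt f a b - RInt g a b.
Proof. intros. exact (RInt_minus f g a b H H0). Qed.

Lemma RInt_const' a b c : RInt (fun _ => c) a b = (b - a) * c.
Proof. rewrite RInt_const. reflexivity. Qed.

Lemma Rpower_cont q z : 0 < z -> continuity_pt (fun x => Rpower x q) z.
Proof.
  intro Hz. apply derivable_continuous_pt. exists (q * Rpower z (q - 1)).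
  apply derivable_pt_lim_power; auto.
Qed.

Lemma Rpower_der q z : 0 < z -> is_derive (fun x => Rpower x q) z (q * Rpower z (q - 1)).
Proof. intro Hz. apply is_derive_Reals. apply derivable_pt_lim_power; auto. Qed.

Lemma limit_zero x : (forall eps, 0 < eps -> Rabs x < eps) -> x = 0.
Proof.
  intro H. destruct (Req_dec x 0) as [|Hn]; auto.
  assert (Ha : 0 < Rabs x) by (apply Rabs_pos_lt; auto).
  specialize (H _ Ha). lra.
Qed.

Lemma lim_right_eps F a l : filterlim F (at_right a) (locally l) ->
  forall eps, 0 < eps -> exists d, 0 < d /\ forall x, a < x < a + d -> Rabs (F x - l) < eps.
Proof.
  intros H eps He. apply filterlim_locally with (eps := mkposreal _ He) in H.
  destruct H as [d Hd]. exists d; split; [apply cond_pos|].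
  intros x Hx. specialize (Hd x). apply Hd.
  - unfold ball; simpl; unfold AbsRing_ball, abs, minus, plus, opp; simpl.
    rewrite Rabs_right; lra.
  - lra.
Qed.

Lemma lim_left_eps F a l : filterlim F (at_left a) (locally l) ->
  forall eps, 0 < eps -> exists d, 0 < d /\ forall x, a - d < x < a -> Rabs (F x - l) < eps.
Proof.
  intros H eps He. apply filterlim_locally with (eps := mkposreal _ He) in H.
  destruct H as [d Hd]. exists d; split; [apply cond_pos|].
  intros x Hx. specialize (Hd x). apply Hd.
  - unfold ball; simpl; unfold AbsRing_ball, abs, minus, plus, opp; simpl.
    rewrite Rabs_left; lra.
  - lra.
Qed.

Lemma cpt_mult f g x : continuity_pt f x -> continuity_pt g x -> continuity_pt (fun y => f y * g y) x.
Proof. intros; exact (continuity_pt_mult f g x H H0). Qed.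
Lemma cpt_plus f g x : continuity_pt f x -> continuity_pt g x -> continuity_pt (fun y => f y + g y) x.
Proof. intros; exact (continuity_pt_plus f g x H H0). Qed.
Lemma cpt_minus f g x : continuity_pt f x -> continuity_pt g x -> continuity_pt (fun y => f y - g y) x.
Proof. intros; exact (continuity_pt_minus f g x H H0). Qed.
Lemma cpt_const c x : continuity_pt (fun _ => c) x.
Proof. apply continuity_pt_const. intros a b; reflexivity. Qed.
Lemma cpt_comp f g x : continuity_pt g x -> continuity_pt f (g x) -> continuity_pt (fun y => f (g y)) x.
Proof. intros; exact (continuity_pt_comp g f x H H0). Qed.
Lemma cpt_pow2 f x : continuity_pt f x -> continuity_pt (fun y => f y ^ 2) x.
Proof. intros. apply (continuity_pt_ext (fun y => f y * (f y * 1))). intro; simpl; ring.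
  apply cpt_mult; auto. apply cpt_mult; auto. apply cpt_const. Qed.
Lemma cpt_abs f x : continuity_pt f x -> continuity_pt (fun y => Rabs (f y)) x.
Proof. intros. apply cpt_comp; auto. apply Rcontinuity_abs. Qed.

Lemma RInt_ext' (f g : R -> R) a b : (forall x, Rmin a b < x < Rmax a b -> f x = g x) ->
  RInt f a b = RInt g a b.
Proof. intro H. apply RInt_ext. exact H. Qed.

Lemma exR_plus f g a b : ex_RInt f a b -> ex_RInt g a b -> ex_RInt (fun x => f x + g x) a b.
Proof. intros. exact (ex_RInt_plus f g a b H H0). Qed.
Lemma exR_scal f a b c : ex_RInt f a b -> ex_RInt (fun x => c * f x) a b.
Proof. intros. exact (ex_RInt_scal f a b c H). Qed.

Lemma ftc_lim (Hc F : R -> R) L : 0 < L -> (forall x, continuity_pt Hc x) ->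
  (forall y, 0 < y < L -> is_derive F y (Hc y)) ->
  filterlim F (at_right 0) (locally 0) -> filterlim F (at_left L) (locally 0) ->
  RInt Hc 0 L = 0.
Proof.
  intros HL Hcc Hd Hr Hl.
  set (Ic := fun x => RInt Hc 0 x).
  assert (HIc : forall x, continuity_pt Ic x).
  { intro x. apply continuous_cpt. apply (ex_derive_continuous (K:=R_AbsRing) (V:=R_NormedModule)).
    exists (Hc x). apply (is_derive_RInt (V:=R_NormedModule) Hc Ic 0 x).
    - apply filter_forall. intro b0. unfold Ic. apply (RInt_correct (V:=R_CompleteNormedModule)).
      apply exR; auto.
    - apply cpt_continuous; auto. }
  assert (I0 : Ic 0 = 0) by (unfold Ic; rewrite RInt_point; reflexivity).
  assert (C1 : forall a b, 0 < a -> a < b -> b < L -> Ic b - F b = Ic a - F a).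
  { intros a b Ha Hab Hb.
    assert (E : RInt Hc a b = F b - F a).
    { apply (is_RInt_unique (V:=R_CompleteNormedModule)).
      apply (is_RInt_derive (V:=R_CompleteNormedModule) F Hc a b).
      - intros x Hx. rewrite Rmin_left, Rmax_right in Hx by lra. apply Hd; lra.
      - intros x _. apply cpt_continuous; auto. }
    assert (Ch := RInt_Chasles (V:=R_CompleteNormedModule) Hc 0 a b (exR _ _ _ Hcc) (exR _ _ _ Hcc)).
    unfold Ic. simpl in Ch. unfold plus in Ch; simpl in Ch. rewrite <- Ch, E. ring. }
  assert (C2 : forall b, 0 < b < L -> Ic b = F b).
  { intros b Hb. apply Rminus_diag_uniq. apply limit_zero. intros eps He.
    destruct (cont_eps _ _ (HIc 0) (eps/2)) as [d1 [Hd1 H1]]; [lra|].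
    destruct (lim_right_eps _ _ _ Hr (eps/2)) as [d2 [Hd2 H2]]; [lra|].
    set (a := Rmin (Rmin d1 d2) b / 2).
    assert (Ha : 0 < a) by (unfold a; unfold Rmin; repeat destruct Rle_dec; lra).
    assert (Ha1 : a < d1) by (unfold a; unfold Rmin; repeat destruct Rle_dec; lra).
    assert (Ha2 : a < d2) by (unfold a; unfold Rmin; repeat destruct Rle_dec; lra).
    assert (Hab : a < b) by (unfold a; unfold Rmin; repeat destruct Rle_dec; lra).
    rewrite (C1 a b) by lra.
    specialize (H1 a). specialize (H2 a).
    rewrite I0, Rminus_0_r, Rminus_0_r in H1. rewrite Rminus_0_r in H2.
    assert (Rabs a < d1) by (rewrite Rabs_right; lra).
    specialize (H1 H). assert (0 < a < 0 + d2) by lra. specialize (H2 H0).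
    revert H1 H2; unfold Rabs; repeat destruct Rcase_abs; lra. }
  change (Ic L = 0). apply limit_zero. intros eps He.
  destruct (cont_eps _ _ (HIc L) (eps/2)) as [d1 [Hd1 H1]]; [lra|].
  destruct (lim_left_eps _ _ _ Hl (eps/2)) as [d2 [Hd2 H2]]; [lra|].
  set (b := L - Rmin (Rmin d1 d2) L / 2).
  assert (Hb : 0 < b < L) by (unfold b; unfold Rmin; repeat destruct Rle_dec; lra).
  assert (Hb1 : L - b < d1) by (unfold b; unfold Rmin; repeat destruct Rle_dec; lra).
  assert (Hb2 : L - d2 < b) by (unfold b; unfold Rmin; repeat destruct Rle_dec; lra).
  specialize (H1 b). specialize (H2 b).
  assert (Rabs (b - L) < d1) by (rewrite Rabs_left; lra).
  specialize (H1 H). assert (L - d2 < b < L) by lra. specialize (H2 H0).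
  rewrite Rminus_0_r in H2. rewrite (C2 b Hb) in H1.
  revert H1 H2; unfold Rabs; repeat destruct Rcase_abs; lra.
Qed.

Lemma interp (W W' : R -> R) L d : 0 < L -> 0 < d ->
  (forall x, continuity_pt W x) -> (forall x, continuity_pt W' x) ->
  (forall x, 0 < x < L -> is_derive W x (W' x)) ->
  (forall x, 0 < x < L -> 0 <= W x) ->
  RInt (fun x => W x ^ 2) 0 L <=
  d * RInt (fun x => W' x ^ 2) 0 L + (/ L + L / (4 * d)) * (RInt W 0 L) ^ 2.
Proof.
  intros HL Hd HWc HW'c HWd HWp.
  assert (cA : forall x, continuity_pt (fun y => Rabs (W' y)) x) by (intro; apply cpt_abs; auto).
  set (S := RInt (fun x => Rabs (W' x)) 0 L).
  set (I := RInt W 0 L).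
  set (E := RInt (fun x => W' x ^ 2) 0 L).
  assert (Habs : forall a b, 0 <= a -> a <= b -> b <= L -> RInt (fun x => Rabs (W' x)) a b <= S).
  { intros a b Ha Hab Hb. unfold S.
    assert (C1 := RInt_Chasles (V:=R_CompleteNormedModule) _ 0 a b (exR _ _ _ cA) (exR _ _ _ cA)).
    assert (C2 := RInt_Chasles (V:=R_CompleteNormedModule) _ 0 b L (exR _ _ _ cA) (exR _ _ _ cA)).
    simpl in C1, C2; unfold plus in C1, C2; simpl in C1, C2.
    rewrite <- C2, <- C1.
    assert (0 <= RInt (fun x => Rabs (W' x)) 0 a).
    { apply RInt_ge_0; auto. apply exR; auto. intros; apply Rabs_pos. }
    assert (0 <= RInt (fun x => Rabs (W' x)) b L).
    { apply RInt_ge_0; auto. apply exR; auto. intros; apply Rabs_pos. }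
    lra. }
  assert (HW : forall x y, 0 < x < L -> 0 < y < L -> W x <= W y + S).
  { intros x y Hx Hy.
    assert (E1 : RInt W' y x = W x - W y).
    { apply (is_RInt_unique (V:=R_CompleteNormedModule)).
      apply (is_RInt_derive (V:=R_CompleteNormedModule) W W' y x).
      - intros z Hz. apply HWd. split.
        + eapply Rlt_le_trans; [|apply Hz]. apply Rmin_glb_lt; lra.
        + eapply Rle_lt_trans; [apply Hz|]. apply Rmax_lub_lt; lra.
      - intros z _. apply cpt_continuous; auto. }
    destruct (Rle_lt_dec y x) as [Hyx|Hxy].
    + assert (A := abs_RInt_le W' y x Hyx (exR _ _ _ HW'c)).
      assert (B := Habs y x ltac:(lra) Hyx ltac:(lra)).
      rewrite E1 in A. assert (W x - W y <= Rabs (W x - W y)) by apply Rle_abs. lra.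
    + assert (A := abs_RInt_le W' x y ltac:(lra) (exR _ _ _ HW'c)).
      assert (B := Habs x y ltac:(lra) ltac:(lra) ltac:(lra)).
      assert (Sw := opp_RInt_swap (V:=R_CompleteNormedModule) W' x y (exR _ _ _ HW'c)).
      simpl in Sw; unfold opp in Sw; simpl in Sw. rewrite E1 in Sw.
      assert (- RInt W' x y <= Rabs (RInt W' x y)) by (rewrite <- Rabs_Ropp; apply Rle_abs).
      lra. }
  assert (HW2 : forall x, 0 < x < L -> W x <= I / L + S).
  { intros x Hx.
    assert (R1 : RInt (fun _ => W x) 0 L <= RInt (fun y => W y + S) 0 L).
    { apply RInt_le; try lra.
      - apply exR; intros; apply cpt_const.
      - apply exR; intros; apply cpt_plus; auto; apply cpt_const.
      - intros y Hy; apply HW; auto. }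
    rewrite RInt_const' in R1. rewrite RInt_plus' in R1 by (apply exR; intros; auto; apply cpt_const).
    rewrite RInt_const' in R1. fold I in R1.
    apply (Rmult_le_reg_l L); auto.
    replace (L * (I / L + S)) with (I + L * S) by (field; lra). lra. }
  assert (HJ : RInt (fun x => W x ^ 2) 0 L <= (I / L + S) * I).
  { unfold I at 2. rewrite <- RInt_scal' by (apply exR; auto).
    apply RInt_le; try lra.
    - apply exR; intros; apply cpt_pow2; auto.
    - apply exR; intros; apply cpt_mult; auto; apply cpt_const.
    - intros x Hx. specialize (HW2 x Hx). specialize (HWp x Hx). nra. }
  assert (HCS : S ^ 2 <= L * E).
  { set (c := S / L).
    assert (P : 0 <= RInt (fun x => (Rabs (W' x) - c) ^ 2) 0 L).
    { apply RInt_ge_0; try lra.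
      - apply exR; intros; apply cpt_pow2, cpt_minus; auto; apply cpt_const.
      - intros; apply pow2_ge_0. }
    rewrite (RInt_ext (V:=R_CompleteNormedModule) (fun x => (Rabs (W' x) - c) ^ 2) (fun x => W' x ^ 2 + ((-2 * c) * Rabs (W' x) + c ^ 2))) in P.
    2:{ intros x _. change ((Rabs (W' x) - c) ^ 2 = W' x ^ 2 + (-2 * c * Rabs (W' x) + c ^ 2)). rewrite <- (pow2_abs (W' x)). ring. }
    rewrite RInt_plus' in P.
    2:{ apply exR; intros; apply cpt_pow2; auto. }
    2:{ apply exR; intros; apply cpt_plus; [apply cpt_mult; auto; apply cpt_const| apply cpt_const]. }
    rewrite RInt_plus' in P.
    2:{ apply exR; intros; apply cpt_mult; auto; apply cpt_const. }
    2:{ apply exR; intros; apply cpt_const. }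
    rewrite RInt_scal' in P by (apply exR; auto).
    rewrite RInt_const' in P. fold S E in P. unfold c in P.
    assert (0 <= L * E - S ^ 2).
    { replace (L * E - S ^ 2) with (L * (E + (-2 * (S / L) * S + (L - 0) * (S / L) ^ 2))) by (field; lra).
      apply Rmult_le_pos; lra. }
    lra. }
  fold E I.
  assert (K1 : S * I <= d * S ^ 2 / L + L * I ^ 2 / (4 * d)).
  { assert (0 <= (d / L) * (S - L * I / (2 * d)) ^ 2).
    { apply Rmult_le_pos. apply Rlt_le, Rdiv_lt_0_compat; auto. apply pow2_ge_0. }
    replace (d * S ^ 2 / L + L * I ^ 2 / (4 * d)) with (S * I + (d / L) * (S - L * I / (2 * d)) ^ 2)
      by (field; lra). lra. }
  assert (K2 : d * S ^ 2 / L <= d * E).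
  { unfold Rdiv. rewrite Rmult_assoc. apply Rmult_le_compat_l; [lra|].
    apply (Rmult_le_reg_l L); auto. replace (L * (S ^ 2 * / L)) with (S ^ 2) by (field; lra). lra. }
  replace ((/ L + L / (4 * d)) * I ^ 2) with (I ^ 2 / L + L * I ^ 2 / (4 * d)) by (field; lra).
  replace ((I / L + S) * I) with (I ^ 2 / L + S * I) in HJ by (field; lra).
  lra.
Qed.

Definition cl (L x : R) : R := Rmax 0 (Rmin L x).

Lemma cl_id L x : 0 <= x <= L -> cl L x = x.
Proof. intros. unfold cl, Rmax, Rmin. repeat destruct Rle_dec; lra. Qed.

Lemma cl_in L x : 0 <= L -> 0 <= cl L x <= L.
Proof. intros. unfold cl, Rmax, Rmin. repeat destruct Rle_dec; lra. Qed.

Lemma cl_lip L x y : 0 <= L -> Rabs (cl L y - cl L x) <= Rabs (y - x).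
Proof. intros. unfold cl, Rmax, Rmin, Rabs. repeat destruct Rle_dec; repeat destruct Rcase_abs; lra. Qed.

Lemma cont_cl L T g t : 0 < L -> cont_on2 (dom L T) g -> 0 <= t < T ->
  forall x, continuity_pt (fun y => g t (cl L y)) x.
Proof.
  intros HL Hg Ht x. apply eps_cont. intros eps He.
  assert (Hd : dom L T t (cl L x)) by (split; auto; apply cl_in; lra).
  destruct (Hg _ _ Hd eps He) as [d [Hd0 Hd1]]. exists d; split; auto.
  intros y Hy. apply Hd1.
  - split; auto; apply cl_in; lra.
  - rewrite Rminus_diag, Rabs_R0; auto.
  - eapply Rle_lt_trans; [apply cl_lip; lra| auto].
Qed.

Lemma cont2_cl L T g t : 0 < L -> cont_on2 (dom L T) g -> 0 < t < T ->
  forall x, continuity_2d_pt (fun s y => g s (cl L y)) t x.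
Proof.
  intros HL Hg Ht x eps.
  assert (Hd : dom L T t (cl L x)) by (split; [lra|]; apply cl_in; lra).
  destruct (Hg _ _ Hd eps (cond_pos eps)) as [d [Hd0 Hd1]].
  assert (Hp : 0 < Rmin d (Rmin t (T - t))) by (unfold Rmin; repeat destruct Rle_dec; lra).
  exists (mkposreal _ Hp). simpl. intros s y Hs Hy.
  assert (m1 := Rmin_l d (Rmin t (T - t))). assert (m2 := Rmin_r d (Rmin t (T - t))).
  assert (m3 := Rmin_l t (T - t)). assert (m4 := Rmin_r t (T - t)).
  apply Hd1.
  - split; [|apply cl_in; lra]. revert Hs; unfold Rabs; destruct Rcase_abs; lra.
  - lra.
  - eapply Rle_lt_trans; [apply cl_lip; lra| lra].
Qed.

Lemma is_derive_eq (f : R -> R) x l l' : is_derive f x l -> l = l' -> is_derive f x l'.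
Proof. intros H ->; auto. Qed.

Lemma ball_R x e y : ball x e y <-> Rabs (y - x) < e.
Proof. unfold ball; simpl; unfold AbsRing_ball, abs, minus, plus, opp; simpl. tauto. Qed.

Lemma locally_R x (P : R -> Prop) : (exists d, 0 < d /\ forall y, Rabs (y - x) < d -> P y) -> locally x P.
Proof. intros [d [Hd H]]. exists (mkposreal _ Hd). intros y Hy. apply H. apply ball_R in Hy. exact Hy. Qed.

Lemma lim_prod0 {T} (F0 : (T -> Prop) -> Prop) {FF : Filter F0} (g h : T -> R) l :
  filterlim g F0 (locally l) -> filterlim h F0 (locally 0) ->
  filterlim (fun a => g a * h a) F0 (locally 0).
Proof.
  intros Hg Hh. apply filterlim_locally. intros eps.
  assert (Hb : 0 < Rabs l + 1) by (assert (0 <= Rabs l) by apply Rabs_pos; lra).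
  assert (He : 0 < eps / (Rabs l + 1)) by (apply Rdiv_lt_0_compat; [apply cond_pos| auto]).
  apply filterlim_locally with (eps := mkposreal 1 Rlt_0_1) in Hg.
  apply filterlim_locally with (eps := mkposreal _ He) in Hh.
  generalize (filter_and _ _ Hg Hh). apply filter_imp. intros a [H1 H2].
  assert (H1' : Rabs (g a - l) < 1) by (apply (proj1 (ball_R _ _ _)); exact H1).
  assert (H2' : Rabs (h a) < eps / (Rabs l + 1)).
  { rewrite <- (Rminus_0_r (h a)). apply (proj1 (ball_R _ _ _)); exact H2. }
  clear H1 H2. apply ball_R. rewrite Rminus_0_r, Rabs_mult.
  assert (Hga : Rabs (g a) <= Rabs l + 1).
  { replace (g a) with ((g a - l) + l) by ring. eapply Rle_trans; [apply Rabs_triang|]. lra. }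
  assert (0 <= Rabs (h a)) by apply Rabs_pos.
  assert (Rabs (g a) * Rabs (h a) <= (Rabs l + 1) * Rabs (h a)) by (apply Rmult_le_compat_r; auto).
  assert (H3 : (Rabs l + 1) * Rabs (h a) < (Rabs l + 1) * (eps / (Rabs l + 1))) by (apply Rmult_lt_compat_l; auto).
  replace ((Rabs l + 1) * (eps / (Rabs l + 1))) with (pos eps) in H3 by (field; lra).
  lra.
Qed.

Lemma lim_right_cont (gc g : R -> R) L : 0 < L -> continuity_pt gc 0 ->
  (forall a, 0 < a < L -> gc a = g a) -> filterlim g (at_right 0) (locally (gc 0)).
Proof.
  intros HL Hc He. apply filterlim_locally. intro eps.
  destruct (cont_eps _ _ Hc eps (cond_pos eps)) as [d [Hd H]].
  assert (Hp : 0 < Rmin d L) by (unfold Rmin; destruct Rle_dec; lra).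
  exists (mkposreal _ Hp). intros y Hy Hy0.
  assert (Hy' : Rabs (y - _) < Rmin d L) by (apply (proj1 (ball_R _ _ _)); exact Hy). clear Hy.
  apply (proj2 (ball_R _ _ _)).
  assert (m1 := Rmin_l d L). assert (m2 := Rmin_r d L).
  rewrite <- He. apply H. lra.
  revert Hy'; unfold Rabs; destruct Rcase_abs; lra.
Qed.

Lemma lim_left_cont (gc g : R -> R) L : 0 < L -> continuity_pt gc L ->
  (forall a, 0 < a < L -> gc a = g a) -> filterlim g (at_left L) (locally (gc L)).
Proof.
  intros HL Hc He. apply filterlim_locally. intro eps.
  destruct (cont_eps _ _ Hc eps (cond_pos eps)) as [d [Hd H]].
  assert (Hp : 0 < Rmin d L) by (unfold Rmin; destruct Rle_dec; lra).
  exists (mkposreal _ Hp). intros y Hy Hy0.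
  assert (Hy' : Rabs (y - _) < Rmin d L) by (apply (proj1 (ball_R _ _ _)); exact Hy). clear Hy.
  apply (proj2 (ball_R _ _ _)).
  assert (m1 := Rmin_l d L). assert (m2 := Rmin_r d L).
  rewrite <- He. apply H. lra.
  revert Hy'; unfold Rabs; destruct Rcase_abs; lra.
Qed.

Lemma key L T eta beta f v u p t : 0 < L -> 0 < t < T ->
  C4beta_loc f beta -> C1_field L T v -> classical_solution L T eta f v u ->
  Derive (fun s => Lp_mass L u p s) t =
  - (p * (p - 1)) * RInt (fun x => Rpower (u t x) (p - 2) * Derive (u t) x *
      (eta * Derive (u t) x + u t x * Derive_n f 2 (u t x) * Derive (u t) x + u t x * v t x)) 0 L.
Proof.
  intros HL Ht [Hfd _] [vt [vx [_ [Hvx [Cv _]]]]]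
    [[ut [ux [uxx [Hut [Hux [Cu [Cut [Cux _]]]]]]]] [Hpos [Hpde Hbc]]].
  assert (Hf2c : forall z, 0 < z -> continuity_pt (Derive_n f 2) z).
  { intros z Hz. apply continuous_cpt.
    apply (ex_derive_continuous (K:=R_AbsRing) (V:=R_NormedModule)). apply Hfd; auto. }
  assert (Ht0 : 0 <= t < T) by lra.
  assert (Hpc : forall s y, 0 <= s < T -> 0 < u s (cl L y)).
  { intros s y Hs. apply Hpos. split; auto. apply cl_in; lra. }
  set (Fp := fun s y => Rpower (u s (cl L y)) p).
  assert (A0 : forall s, Lp_mass L u p s = RInt (Fp s) 0 L).
  { intro s. unfold Lp_mass. apply RInt_ext. intros x Hx.
    rewrite Rmin_left, Rmax_right in Hx by lra. unfold Fp. rewrite cl_id; auto; lra. }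
  assert (D1 : forall s y, 0 < s < T -> is_derive (fun z => Fp z y) s
               (p * Rpower (u s (cl L y)) (p - 1) * ut s (cl L y))).
  { intros s y Hs. eapply is_derive_eq.
    - apply (is_derive_comp (fun z => Rpower z p) (fun z => u z (cl L y))).
      + apply Rpower_der. apply Hpc; lra.
      + apply Hut; auto. apply cl_in; lra.
    - unfold scal; simpl; unfold mult; simpl. ring. }
  assert (Hnb : 0 < Rmin t (T - t)) by (unfold Rmin; destruct Rle_dec; lra).
  assert (Hnb' : forall s, Rabs (s - t) < Rmin t (T - t) -> 0 < s < T).
  { intros s Hs. assert (m1 := Rmin_l t (T - t)). assert (m2 := Rmin_r t (T - t)).
    revert Hs; unfold Rabs; destruct Rcase_abs; lra. }
  assert (A1 : Derive (fun s => Lp_mass L u p s) t =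
               RInt (fun y => p * Rpower (u t (cl L y)) (p - 1) * ut t (cl L y)) 0 L).
  { transitivity (Derive (fun s => RInt (Fp s) 0 L) t); [apply Derive_ext; exact A0|].
    apply is_derive_unique. eapply is_derive_eq; [apply (is_derive_RInt_param Fp 0 L t)|].
    - apply locally_R. exists (Rmin t (T - t)); split; auto. intros s Hs y _.
      eexists. apply D1. auto.
    - intros y _. 
      apply (continuity_2d_pt_ext_loc (fun s y => p * Rpower (u s (cl L y)) (p - 1) * ut s (cl L y))).
      + exists (mkposreal _ Hnb). intros s y' Hs _. simpl in Hs. symmetry.
        apply is_derive_unique. apply D1; auto.
      + apply (continuity_2d_pt_mult (fun s y => p * Rpower (u s (cl L y)) (p - 1)) (fun s y => ut s (cl L y))).
        * apply (continuity_2d_pt_mult (fun s y => p) (fun s y => Rpower (u s (cl L y)) (p - 1))).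
          -- apply continuity_2d_pt_const.
          -- apply (continuity_1d_2d_pt_comp (fun z => Rpower z (p - 1)) (fun s y => u s (cl L y))).
             ++ apply Rpower_cont. apply Hpc; lra.
             ++ apply (cont2_cl L T); auto.
        * apply (cont2_cl L T); auto.
    - apply locally_R. exists (Rmin t (T - t)); split; auto. intros s Hs.
      specialize (Hnb' s Hs). apply exR. intro x. unfold Fp.
      apply (cpt_comp (fun z => Rpower z p) (fun y => u s (cl L y))).
      + apply (cont_cl L T); auto; lra.
      + apply Rpower_cont, Hpc; lra.
    - apply RInt_ext. intros y _. apply is_derive_unique. apply D1; auto. }

  assert (cU := cont_cl L T u t HL Cu Ht0).
  assert (cUx := cont_cl L T ux t HL Cux Ht0).
  assert (cUt := cont_cl L T ut t HL Cut Ht0).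
  assert (cV := cont_cl L T v t HL Cv Ht0).
  assert (cF2 : forall x, continuity_pt (fun y => Derive_n f 2 (u t (cl L y))) x).
  { intro x. apply (cpt_comp (Derive_n f 2) (fun y => u t (cl L y))); auto. }
  assert (cRp : forall q x, continuity_pt (fun y => Rpower (u t (cl L y)) q) x).
  { intros q x. apply (cpt_comp (fun z => Rpower z q) (fun y => u t (cl L y))); auto.
    apply Rpower_cont; auto. }
  set (Phc := fun y => eta * ux t (cl L y) + u t (cl L y) * Derive_n f 2 (u t (cl L y)) * ux t (cl L y)
                       + u t (cl L y) * v t (cl L y)).
  set (Gc := fun y => Rpower (u t (cl L y)) (p - 2) * ux t (cl L y) * Phc y).
  set (P1c := fun y => Rpower (u t (cl L y)) (p - 1) * ut t (cl L y)).
  set (Hc := fun y => (p - 1) * Gc y + P1c y).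
  assert (cPhc : forall x, continuity_pt Phc x).
  { intro x. unfold Phc.
    repeat first [apply cpt_plus | apply cpt_mult | apply cpt_const | apply cU | apply cUx | apply cV | apply cF2]. }
  assert (cGc : forall x, continuity_pt Gc x).
  { intro x. unfold Gc. repeat first [apply cpt_mult | apply cRp | apply cUx | apply cPhc]. }
  assert (cP1c : forall x, continuity_pt P1c x).
  { intro x. unfold P1c. repeat first [apply cpt_mult | apply cRp | apply cUt]. }
  assert (cHc : forall x, continuity_pt Hc x).
  { intro x. unfold Hc. apply cpt_plus; [apply cpt_mult; [apply cpt_const| apply cGc]| apply cP1c]. }
  assert (FL1 : forall y, 0 < y < L -> flux eta f v u t y =
     eta * ux t y + u t y * Derive_n f 2 (u t y) * ux t y + u t y * v t y).
  { intros y Hy. assert (Hu := Hpos t y ltac:(split; lra)).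
    destruct (Hux t y Ht0 Hy) as [Hd1 _].
    unfold flux.
    replace (Derive (fun y0 => ln (u t y0)) y) with (ux t y / u t y).
    2:{ symmetry; apply is_derive_unique. eapply is_derive_eq. apply (is_derive_comp ln (u t)). apply is_derive_ln; auto. exact Hd1.
        unfold scal; simpl; unfold mult; simpl. unfold Rdiv. ring. }
    replace (Derive (fun y0 => Derive f (u t y0)) y) with (Derive_n f 2 (u t y) * ux t y).
    2:{ symmetry; apply is_derive_unique. eapply is_derive_eq. apply (is_derive_comp (Derive f) (u t)).
        apply Derive_correct. apply (Hfd 1%nat); auto. exact Hd1.
        unfold scal; simpl; unfold mult; simpl. rewrite Rmult_comm; reflexivity. }
    field. lra. }
  assert (FL2 : forall y, 0 < y < L -> ex_derive (flux eta f v u t) y).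
  { intros y Hy.
    apply (ex_derive_ext_loc (fun y => eta * ux t y + u t y * Derive_n f 2 (u t y) * ux t y + u t y * v t y)).
    - apply locally_R. exists (Rmin y (L - y)). split.
      + unfold Rmin; destruct Rle_dec; lra.
      + intros z Hz. assert (m1 := Rmin_l y (L - y)). assert (m2 := Rmin_r y (L - y)).
        symmetry. apply FL1. revert Hz; unfold Rabs; destruct Rcase_abs; lra.
    - destruct (Hux t y Ht0 Hy) as [Hd1 Hd2].
      auto_derive. repeat split.
      + eexists; exact Hd2.
      + eexists; exact Hd1.
      + apply (Hfd 2%nat); auto. apply Hpos. split; lra.
      + eexists; exact Hd1.
      + eexists; exact Hd2.
      + eexists; exact Hd1.
      + eexists; apply Hvx; auto. }
  assert (FL3 : forall y, 0 < y < L -> Derive (flux eta f v u t) y = ut t y).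
  { intros y Hy. change (Derive (fun y0 => flux eta f v u t y0) y = ut t y). rewrite <- (Hpde t y Ht Hy). apply is_derive_unique. apply Hut; auto. lra. }
  set (F := fun y => Rpower (u t y) (p - 1) * flux eta f v u t y).
  assert (HD : forall y, 0 < y < L -> is_derive F y (Hc y)).
  { intros y Hy. assert (Hu := Hpos t y ltac:(split; lra)).
    destruct (Hux t y Ht0 Hy) as [Hd1 _].
    eapply is_derive_eq.
    - apply (is_derive_mult (fun y => Rpower (u t y) (p - 1)) (flux eta f v u t)).
      + apply (is_derive_comp (fun z => Rpower z (p - 1)) (u t)). apply Rpower_der; auto. exact Hd1.
      + apply Derive_correct. apply FL2; auto.
      + intros; apply Rmult_comm.
    - unfold scal, plus, mult; simpl. unfold mult, plus; simpl. rewrite FL3, FL1 by auto.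
      unfold Hc, Gc, P1c, Phc. rewrite cl_id by lra.
      replace (p - 2) with ((p - 1) - 1) by ring. ring. }
  assert (Hlr : filterlim F (at_right 0) (locally 0)).
  { apply (lim_prod0 _ (fun a => Rpower (u t a) (p - 1)) (flux eta f v u t) (Rpower (u t (cl L 0)) (p - 1))).
    - apply (lim_right_cont (fun y => Rpower (u t (cl L y)) (p - 1)) _ L); auto.
      intros a Ha. rewrite cl_id; auto; lra.
    - apply Hbc; auto. }
  assert (Hll : filterlim F (at_left L) (locally 0)).
  { apply (lim_prod0 _ (fun a => Rpower (u t a) (p - 1)) (flux eta f v u t) (Rpower (u t (cl L L)) (p - 1))).
    - apply (lim_left_cont (fun y => Rpower (u t (cl L y)) (p - 1)) _ L); auto.
      intros a Ha. rewrite cl_id; auto; lra.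
    - apply Hbc; auto. }
  assert (HR0 := ftc_lim Hc F L HL cHc HD Hlr Hll).
  unfold Hc in HR0. rewrite RInt_plus' in HR0 by (apply exR; intro; auto; apply cpt_mult; auto; apply cpt_const).
  rewrite RInt_scal' in HR0 by (apply exR; auto).
  rewrite A1.
  rewrite (RInt_ext' _ (fun y => p * P1c y)) by (intros; unfold P1c; ring).
  rewrite RInt_scal' by (apply exR; auto).
  rewrite (RInt_ext' (fun x => Rpower (u t x) (p - 2) * Derive (u t) x * (eta * Derive (u t) x + u t x * Derive_n f 2 (u t x) * Derive (u t) x + u t x * v t x)) Gc).
  2:{ intros x Hx. rewrite Rmin_left, Rmax_right in Hx by lra.
      destruct (Hux t x Ht0 Hx) as [Hd1 _]. rewrite (is_derive_unique _ _ _ Hd1).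
      unfold Gc, Phc. rewrite cl_id by lra. reflexivity. }
  assert (RInt P1c 0 L = - (p - 1) * RInt Gc 0 L) by lra.
  rewrite H. ring.
Qed.

Lemma Rpower_p2 U p : 0 < U -> Rpower U p = Rpower U (p - 2) * U ^ 2.
Proof.
  intro HU. rewrite <- (Rpower_pow 2 U HU). rewrite <- Rpower_plus.
  f_equal. simpl. ring.
Qed.

Lemma Rpower_sq U q : Rpower U q ^ 2 = Rpower U (2 * q).
Proof. simpl. rewrite Rmult_1_r, <- Rpower_plus. f_equal; ring. Qed.

Lemma pointwise1 w U X F2 V M eta : 0 < w -> 0 < U -> 0 <= F2 -> Rabs V <= M -> 0 < eta ->
  - (w * X * (eta * X + U * F2 * X + U * V)) + / 2 * ((eta + 2 * U * F2) * w * X ^ 2)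
  <= M ^ 2 / 2 / eta * (w * U ^ 2).
Proof.
  intros Hw HU HF HV He.
  assert (HV2 : V ^ 2 <= M ^ 2).
  { rewrite <- pow2_abs. assert (0 <= Rabs V) by apply Rabs_pos. nra. }
  assert (E : M ^ 2 / 2 / eta * (w * U ^ 2) -
     (- (w * X * (eta * X + U * F2 * X + U * V)) + / 2 * ((eta + 2 * U * F2) * w * X ^ 2))
     = w / (2 * eta) * ((eta * X + U * V) ^ 2 + U ^ 2 * (M ^ 2 - V ^ 2))) by (field; lra).
  assert (0 <= w / (2 * eta) * ((eta * X + U * V) ^ 2 + U ^ 2 * (M ^ 2 - V ^ 2))).
  { apply Rmult_le_pos. apply Rlt_le, Rdiv_lt_0_compat; lra.
    assert (0 <= (eta * X + U * V) ^ 2) by apply pow2_ge_0.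
    assert (0 <= U ^ 2 * (M ^ 2 - V ^ 2)) by (apply Rmult_le_pos; [apply pow2_ge_0| lra]). lra. }
  lra.
Qed.

Theorem propositionA2 :
  forall (L eta M : R), 0 < L -> 0 < eta -> 0 < M ->
  let K1 := M ^ 2 / 2 in
  exists K2 K3 K4 K5 : R, 0 < K2 /\ 0 < K3 /\ 0 < K4 /\ 0 < K5 /\
  forall (T beta : R) (f : R -> R) (v u : R -> R -> R),
    0 < T -> 0 < beta <= 1 ->
    C4beta_loc f beta ->
    (forall x, 0 < x -> 0 <= Derive_n f 2 x) ->
    C1_field L T v ->
    (forall t x, dom L T t x -> Rabs (v t x) <= M) ->
    classical_solution L T eta f v u ->
    0 < K1 /\
    (forall p t, p <> 0 -> p <> 1 -> 0 < t < T ->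
       / (p * (p - 1)) * Derive (fun s => Lp_mass L u p s) t
       + / 2 * RInt (fun x => (eta + 2 * u t x * Derive_n f 2 (u t x))
                              * Rpower (u t x) (p - 2)
                              * (Derive (u t) x) ^ 2) 0 L
       <= K1 / eta * Lp_mass L u p t) /\
    (forall p t, Rabs p > K5 -> 0 < t < T ->
       Derive (fun s => Lp_mass L u p s) t + K2 * Lp_mass L u p t
       <= K3 * Rpower (Rabs p) K4 * (Lp_mass L u (p / 2) t) ^ 2).
Proof.
  intros L eta M HL Heta HM K1.
  assert (HK1 : 0 < K1) by (unfold K1; nra).
  set (c := 2 * K1 / eta + 1).
  assert (Hc : 1 < c) by (unfold c; assert (0 < 2 * K1 / eta) by (apply Rdiv_lt_0_compat; lra); lra).
  exists 1, (c / L + c ^ 2 * L / (4 * eta)), 4, 2.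
  split; [lra|]. split.
  { assert (0 < c / L) by (apply Rdiv_lt_0_compat; lra).
    assert (0 < c ^ 2) by (apply pow_lt; lra).
    assert (0 < c ^ 2 * L / (4 * eta)) by (apply Rdiv_lt_0_compat; [apply Rmult_lt_0_compat|]; lra). lra. }
  split; [lra|]. split; [lra|].
  intros T beta f v u HT Hb Hf Hf2 Hv Hvb Hsol.
  assert (I1 : forall p t, p * (p - 1) <> 0 -> 0 < t < T ->
       / (p * (p - 1)) * Derive (fun s => Lp_mass L u p s) t
       + / 2 * RInt (fun x => (eta + 2 * u t x * Derive_n f 2 (u t x))
                              * Rpower (u t x) (p - 2)
                              * (Derive (u t) x) ^ 2) 0 L
       <= K1 / eta * Lp_mass L u p t).
  { intros p t HP Ht.
    assert (Hsol' := Hsol). assert (Hv' := Hv). assert (Hf' := Hf).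
    destruct Hsol' as [[ut [ux [uxx [Hut [Hux [Cu [Cut [Cux _]]]]]]]] [Hpos _]].
    destruct Hv' as [vt [vx [_ [_ [Cv _]]]]].
    destruct Hf' as [Hfd _].
    assert (Ht0 : 0 <= t < T) by lra.
    assert (Hpc : forall y, 0 < u t (cl L y)).
    { intros y. apply Hpos. split; auto. apply cl_in; lra. }
    assert (Hf2c : forall z, 0 < z -> continuity_pt (Derive_n f 2) z).
    { intros z Hz. apply continuous_cpt.
      apply (ex_derive_continuous (K:=R_AbsRing) (V:=R_NormedModule)). apply Hfd; auto. }
    assert (cU := cont_cl L T u t HL Cu Ht0).
    assert (cUx := cont_cl L T ux t HL Cux Ht0).
    assert (cV := cont_cl L T v t HL Cv Ht0).
    assert (cF2 : forall x, continuity_pt (fun y => Derive_n f 2 (u t (cl L y))) x).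
    { intro x. apply (cpt_comp (Derive_n f 2) (fun y => u t (cl L y))); auto. }
    assert (cRp : forall q x, continuity_pt (fun y => Rpower (u t (cl L y)) q) x).
    { intros q x. apply (cpt_comp (fun z => Rpower z q) (fun y => u t (cl L y))); auto.
      apply Rpower_cont; auto. }
    assert (Dx : forall x, 0 < x < L -> Derive (u t) x = ux t x).
    { intros x Hx. destruct (Hux t x Ht0 Hx) as [Hd1 _]. apply is_derive_unique; auto. }

    rewrite (key L T eta beta f v u p t HL Ht Hf Hv Hsol).
    set (G := fun x => Rpower (u t x) (p - 2) * Derive (u t) x * (eta * Derive (u t) x + u t x * Derive_n f 2 (u t x) * Derive (u t) x + u t x * v t x)).
    set (Q := fun x => (eta + 2 * u t x * Derive_n f 2 (u t x)) * Rpower (u t x) (p - 2) * Derive (u t) x ^ 2).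
    unfold Lp_mass.
    assert (exG : ex_RInt G 0 L).
    { apply (exR' G (fun y => Rpower (u t (cl L y)) (p - 2) * ux t (cl L y) * (eta * ux t (cl L y) + u t (cl L y) * Derive_n f 2 (u t (cl L y)) * ux t (cl L y) + u t (cl L y) * v t (cl L y)))).
      - intro; repeat first [apply cpt_pow2 | apply cpt_plus | apply cpt_mult | apply cpt_const | apply cU | apply cUx | apply cV | apply cF2 | apply cRp].
      - intros x Hx; rewrite Rmin_left, Rmax_right in Hx by lra; try unfold G; try unfold Q; rewrite ?Dx by lra; rewrite cl_id by lra; reflexivity. }
    assert (exQ : ex_RInt Q 0 L).
    { apply (exR' Q (fun y => (eta + 2 * u t (cl L y) * Derive_n f 2 (u t (cl L y))) * Rpower (u t (cl L y)) (p - 2) * ux t (cl L y) ^ 2)).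
      - intro; repeat first [apply cpt_pow2 | apply cpt_plus | apply cpt_mult | apply cpt_const | apply cU | apply cUx | apply cV | apply cF2 | apply cRp].
      - intros x Hx; rewrite Rmin_left, Rmax_right in Hx by lra; try unfold G; try unfold Q; rewrite ?Dx by lra; rewrite cl_id by lra; reflexivity. }
    assert (exR0 : ex_RInt (fun x => Rpower (u t x) p) 0 L).
    { apply (exR' _ (fun y => Rpower (u t (cl L y)) p)).
      - intro; repeat first [apply cpt_pow2 | apply cpt_plus | apply cpt_mult | apply cpt_const | apply cU | apply cUx | apply cV | apply cF2 | apply cRp].
      - intros x Hx; rewrite Rmin_left, Rmax_right in Hx by lra; try unfold G; try unfold Q; rewrite ?Dx by lra; rewrite cl_id by lra; reflexivity. }
    replace (/ (p * (p - 1)) * (- (p * (p - 1)) * RInt G 0 L)) with (-1 * RInt G 0 L).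
    2:{ assert (p <> 0) by (intro E; apply HP; rewrite E; ring).
        assert (p - 1 <> 0) by (intro E; apply HP; rewrite E; ring). field; auto. }
    rewrite <- (RInt_scal' G 0 L (-1) exG), <- (RInt_scal' Q 0 L (/ 2) exQ).
    rewrite <- RInt_plus' by (apply exR_scal; auto).
    rewrite <- RInt_scal' by auto.
    apply RInt_le; try lra.
    - apply exR_plus; apply exR_scal; auto.
    - apply exR_scal; auto.
    - intros x Hx. assert (Hu : 0 < u t x) by (apply Hpos; split; lra).
      unfold G, Q. rewrite (Rpower_p2 (u t x) p Hu).
      assert (Hpw := pointwise1 (Rpower (u t x) (p - 2)) (u t x) (Derive (u t) x) (Derive_n f 2 (u t x)) (v t x) M eta
                  (Rpower_pos _ _) Hu (Hf2 _ Hu) (Hvb t x ltac:(split; lra)) Heta).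
      unfold K1. lra.
  }

  split; [exact HK1|]. split.
  { intros p t Hp0 Hp1 Ht. apply I1; auto. intro E. apply Rmult_integral in E. destruct E; lra. }
  intros p t Hp Ht.
  assert (Hp2 : 4 < p ^ 2).
  { rewrite <- pow2_abs. nra. }
  set (P := p * (p - 1)).
  assert (HPlo : p ^ 2 / 2 <= P).
  { unfold P. revert Hp; unfold Rabs; destruct Rcase_abs; intro; nra. }
  assert (HPhi : P <= 2 * p ^ 2).
  { unfold P. revert Hp; unfold Rabs; destruct Rcase_abs; intro; nra. }
  assert (HP : 0 < P) by lra.
  assert (I1' := I1 p t ltac:(fold P; lra) Ht). fold P in I1'.

    assert (Hsol' := Hsol). assert (Hv' := Hv). assert (Hf' := Hf).
    destruct Hsol' as [[ut [ux [uxx [Hut [Hux [Cu [Cut [Cux _]]]]]]]] [Hpos _]].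
    destruct Hv' as [vt [vx [_ [_ [Cv _]]]]].
    destruct Hf' as [Hfd _].
    assert (Ht0 : 0 <= t < T) by lra.
    assert (Hpc : forall y, 0 < u t (cl L y)).
    { intros y. apply Hpos. split; auto. apply cl_in; lra. }
    assert (Hf2c : forall z, 0 < z -> continuity_pt (Derive_n f 2) z).
    { intros z Hz. apply continuous_cpt.
      apply (ex_derive_continuous (K:=R_AbsRing) (V:=R_NormedModule)). apply Hfd; auto. }
    assert (cU := cont_cl L T u t HL Cu Ht0).
    assert (cUx := cont_cl L T ux t HL Cux Ht0).
    assert (cV := cont_cl L T v t HL Cv Ht0).
    assert (cF2 : forall x, continuity_pt (fun y => Derive_n f 2 (u t (cl L y))) x).
    { intro x. apply (cpt_comp (Derive_n f 2) (fun y => u t (cl L y))); auto. }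
    assert (cRp : forall q x, continuity_pt (fun y => Rpower (u t (cl L y)) q) x).
    { intros q x. apply (cpt_comp (fun z => Rpower z q) (fun y => u t (cl L y))); auto.
      apply Rpower_cont; auto. }
    assert (Dx : forall x, 0 < x < L -> Derive (u t) x = ux t x).
    { intros x Hx. destruct (Hux t x Ht0 Hx) as [Hd1 _]. apply is_derive_unique; auto. }

  set (Q := fun x => (eta + 2 * u t x * Derive_n f 2 (u t x)) * Rpower (u t x) (p - 2) * Derive (u t) x ^ 2).
  set (G := fun x => Rpower (u t x) (p - 2) * Derive (u t) x ^ 2).
  assert (exQ : ex_RInt Q 0 L).
  { apply (exR' Q (fun y => (eta + 2 * u t (cl L y) * Derive_n f 2 (u t (cl L y))) * Rpower (u t (cl L y)) (p - 2) * ux t (cl L y) ^ 2)).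
    - intro; repeat first [apply cpt_pow2 | apply cpt_plus | apply cpt_mult | apply cpt_const | apply cU | apply cUx | apply cV | apply cF2 | apply cRp].
    - intros x Hx; rewrite Rmin_left, Rmax_right in Hx by lra; try unfold G; try unfold Q; rewrite ?Dx by lra; rewrite cl_id by lra; reflexivity. }
  assert (exG : ex_RInt G 0 L).
  { apply (exR' G (fun y => Rpower (u t (cl L y)) (p - 2) * ux t (cl L y) ^ 2)).
    - intro; repeat first [apply cpt_pow2 | apply cpt_plus | apply cpt_mult | apply cpt_const | apply cU | apply cUx | apply cV | apply cF2 | apply cRp].
    - intros x Hx; rewrite Rmin_left, Rmax_right in Hx by lra; try unfold G; try unfold Q; rewrite ?Dx by lra; rewrite cl_id by lra; reflexivity. }
  set (D := RInt G 0 L).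
  set (J := Lp_mass L u p t).
  set (I := Lp_mass L u (p / 2) t).
  set (Der := Derive (fun s => Lp_mass L u p s) t).
  fold Q J Der in I1'.
  assert (HQD : eta * D <= RInt Q 0 L).
  { unfold D. rewrite <- RInt_scal' by auto. apply RInt_le; try lra; auto.
    - apply exR_scal; auto.
    - intros x Hx. assert (Hu : 0 < u t x) by (apply Hpos; split; lra).
      unfold G, Q. assert (Hw := Rpower_pos (u t x) (p - 2)).
      assert (HX := pow2_ge_0 (Derive (u t) x)).
      assert (HF := Hf2 _ Hu).
      assert (0 <= u t x * Derive_n f 2 (u t x) * Rpower (u t x) (p - 2) * Derive (u t) x ^ 2).
      { apply Rmult_le_pos; [|apply pow2_ge_0]. apply Rmult_le_pos; [|lra]. apply Rmult_le_pos; lra. }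
      nra. }
  assert (Hder : Der <= P * (K1 / eta * J - eta / 2 * D)).
  { replace Der with (P * (/ P * Der)) by (field; lra).
    apply Rmult_le_compat_l; lra. }
  set (A := P * K1 / eta + 1).
  assert (HA : 0 < A).
  { unfold A. assert (0 < P * K1 / eta) by (apply Rdiv_lt_0_compat; [apply Rmult_lt_0_compat|]; lra). lra. }
  set (dl := 2 * P * eta / (A * p ^ 2)).
  assert (Hdl : 0 < dl).
  { unfold dl. apply Rdiv_lt_0_compat. nra. apply Rmult_lt_0_compat; lra. }
  set (W := fun y => Rpower (u t (cl L y)) (p / 2)).
  set (W' := fun y => p / 2 * Rpower (u t (cl L y)) (p / 2 - 1) * ux t (cl L y)).
  assert (Hint : RInt (fun x => W x ^ 2) 0 L <=
     dl * RInt (fun x => W' x ^ 2) 0 L + (/ L + L / (4 * dl)) * (RInt W 0 L) ^ 2).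
  { apply interp; auto.
    - intro x; unfold W; apply cRp.
    - intro x; unfold W'; repeat first [apply cpt_pow2 | apply cpt_plus | apply cpt_mult | apply cpt_const | apply cU | apply cUx | apply cV | apply cF2 | apply cRp].
    - intros y Hy. destruct (Hux t y Ht0 Hy) as [Hd1 _].
      assert (Hu : 0 < u t y) by (apply Hpos; split; lra).
      apply (is_derive_ext_loc (fun z => Rpower (u t z) (p / 2))).
      + apply locally_R. exists (Rmin y (L - y)). split.
        * unfold Rmin; destruct Rle_dec; lra.
        * intros z Hz. assert (m1 := Rmin_l y (L - y)). assert (m2 := Rmin_r y (L - y)).
          unfold W. rewrite cl_id; auto. revert Hz; unfold Rabs; destruct Rcase_abs; lra.
      + eapply is_derive_eq.
        * apply (is_derive_comp (fun z => Rpower z (p / 2)) (u t)). apply Rpower_der; auto. exact Hd1.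
        * unfold W'. rewrite cl_id by lra. unfold scal; simpl; unfold mult; simpl. ring.
    - intros x _. apply Rlt_le, Rpower_pos. }
  assert (EJ : RInt (fun x => W x ^ 2) 0 L = J).
  { unfold J, Lp_mass. apply RInt_ext'. intros x Hx. rewrite Rmin_left, Rmax_right in Hx by lra.
    unfold W. rewrite cl_id by lra. rewrite Rpower_sq. f_equal. field. }
  assert (EI : RInt W 0 L = I).
  { unfold I, Lp_mass. apply RInt_ext'. intros x Hx. rewrite Rmin_left, Rmax_right in Hx by lra.
    unfold W. rewrite cl_id by lra. reflexivity. }
  assert (EW : RInt (fun x => W' x ^ 2) 0 L = p ^ 2 / 4 * D).
  { unfold D. rewrite <- RInt_scal' by auto. apply RInt_ext'. intros x Hx.
    rewrite Rmin_left, Rmax_right in Hx by lra.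
    unfold W', G. rewrite cl_id by lra. rewrite Dx by lra.
    replace (Rpower (u t x) (p - 2)) with (Rpower (u t x) (p / 2 - 1) ^ 2)
      by (rewrite Rpower_sq; f_equal; field).
    field. }
  rewrite EJ, EI, EW in Hint.
  assert (E4 : Rpower (Rabs p) 4 = p ^ 4).
  { replace 4 with (INR 4) by (simpl; ring). rewrite Rpower_pow.
    - replace (Rabs p ^ 4) with ((Rabs p ^ 2) ^ 2) by ring. rewrite pow2_abs. ring.
    - lra. }
  rewrite E4. fold Der J I.
  assert (S3 : A * (dl * (p ^ 2 / 4 * D)) = P * eta / 2 * D).
  { unfold dl. field. split; [nra| lra]. }
  assert (S2 : A * J <= A * (dl * (p ^ 2 / 4 * D) + (/ L + L / (4 * dl)) * I ^ 2)).
  { apply Rmult_le_compat_l; lra. }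
  assert (S1 : Der + 1 * J <= A * J - P * eta / 2 * D).
  { unfold A. revert Hder. unfold K1. intro. 
    replace (P * (M ^ 2 / 2 / eta * J - eta / 2 * D)) with (P * (M ^ 2 / 2) / eta * J - P * eta / 2 * D) in Hder by (field; lra).
    replace ((P * (M ^ 2 / 2) / eta + 1) * J) with (P * (M ^ 2 / 2) / eta * J + J) by ring. lra. }
  assert (S4 : A * (/ L + L / (4 * dl)) <= (c / L + c ^ 2 * L / (4 * eta)) * p ^ 4).
  { assert (EA : A * (/ L + L / (4 * dl)) = A / L + A ^ 2 * (L / (8 * eta)) * (p ^ 2 / P)).
    { unfold dl. field. repeat split; nra. }
    rewrite EA.
    assert (HAc : A <= c * p ^ 2).
    { unfold A, c. assert (0 < K1 / eta) by (apply Rdiv_lt_0_compat; lra).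
      assert (P * K1 / eta = P * (K1 / eta)) by (field; lra).
      assert (2 * K1 / eta = 2 * (K1 / eta)) by (field; lra).
      nra. }
    assert (Hp4 : p ^ 2 <= p ^ 4) by nra.
    assert (H1 : A / L <= c / L * p ^ 4).
    { unfold Rdiv. rewrite (Rmult_comm c), Rmult_assoc. rewrite (Rmult_comm A).
      apply Rmult_le_compat_l. apply Rlt_le, Rinv_0_lt_compat; lra. nra. }
    assert (HA2 : A ^ 2 <= c ^ 2 * p ^ 4) by nra.
    assert (Hpp : p ^ 2 / P <= 2).
    { apply (Rmult_le_reg_r P); auto. unfold Rdiv. rewrite Rmult_assoc, Rinv_l by lra. lra. }
    assert (Hpp0 : 0 <= p ^ 2 / P) by (apply Rlt_le, Rdiv_lt_0_compat; lra).
    assert (HL8 : 0 < L / (8 * eta)) by (apply Rdiv_lt_0_compat; lra).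
    assert (H2 : A ^ 2 * (L / (8 * eta)) * (p ^ 2 / P) <= c ^ 2 * p ^ 4 * (L / (8 * eta)) * 2).
    { apply Rmult_le_compat; try nra. }
    replace (c ^ 2 * p ^ 4 * (L / (8 * eta)) * 2) with (c ^ 2 * L / (4 * eta) * p ^ 4) in H2 by (field; lra).
    lra. }
  assert (HI2 : 0 <= I ^ 2) by apply pow2_ge_0.
  assert (S5 : A * (/ L + L / (4 * dl)) * I ^ 2 <= (c / L + c ^ 2 * L / (4 * eta)) * p ^ 4 * I ^ 2).
  { apply Rmult_le_compat_r; auto. }
  lra.
Qed.
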